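(* Let $q=2^m\geq 4$ with $m$ a positive integer, let $b\in\mathbb{F}_q^*$ and $\delta\in\mathbb{F}_{q^2}\setminus\mathbb{F}_q$. Put $$B=b^4(\delta^q+\delta)^4\delta^{q+1},\quad C=b^4(\delta^q+\delta)^4,\quad D=b^4(\delta^q+\delta)^5,$$ and define $S_{-1}=0$, $S_0=1$, $S_i=C^{2^{i-1}}S_{i-1}+D^{2^{i-1}}S_{i-2}$ for $i\geq1$. If the polynomial $$P(x)=b(x^q+x+\delta)^{1+(q^2+q)/4}+x$$ permutes $\mathbb{F}_{q^2}$, then its compositional inverse over $\mathbb{F}_{q^2}$ is $$P^{-1}(x)=x+b\left(\delta+\sum_{i=0}^{m-1}\left(S_{m-2-i}^{2^{i+1}}+D^{1-2^{i+1}}S_i\right)\left((x^q+x)^4+B\right)^{2^i}\right)^{1+(q^2+q)/4}.$$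
   Context: The compositional inverse of a permutation polynomial $f$ of $\mathbb{F}_{Q}$ is the unique polynomial $f^{-1}$ (modulo $x^Q-x$) with $f(f^{-1}(c))=f^{-1}(f(c))=c$ for all $c\in\mathbb{F}_Q$. *)

(* Defs.v *)
From HB Require Import structures.
From mathcomp Require Import all_boot all_order all_algebra all_field.
Set Implicit Arguments. Unset Strict Implicit. Unset Printing Implicit Defensive.
Import GRing.Theory.
Local Open Scope ring_scope.

(* Spair C D n = (S_{n-1}, S_n) where S_{-1} = 0, S_0 = 1 and
   S_i = C^(2^(i-1)) S_{i-1} + D^(2^(i-1)) S_{i-2} for i >= 1. *)
Fixpoint Spair (F : fieldType) (C D : F) (n : nat) : F * F :=
  match n with
  | O => (0, 1)
  | k.+1 => let: (a, c) := Spair C D k in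
            (c, C ^+ (2 ^ k) * c + D ^+ (2 ^ k) * a)
  end.

Definition Sprev (F : fieldType) (C D : F) (n : nat) : F := (Spair C D n).1.
Definition Sseq (F : fieldType) (C D : F) (n : nat) : F := (Spair C D n).2.

(* Main.v *)
Require Import Defs.
From HB Require Import structures.
From mathcomp Require Import all_boot all_order all_algebra all_field.
From mathcomp Require Import ring zify.
Set Implicit Arguments. Unset Strict Implicit. Unset Printing Implicit Defensive.
Import GRing.Theory.
Local Open Scope ring_scope.


Section Char2.
Variable F : fieldType.
Hypothesis hchar : (2%N \in [pchar F]).

Lemma sqrD (x y : F) : (x + y) ^+ 2 = x ^+ 2 + y ^+ 2.
Proof. by rewrite exprDn_pchar // pnatE. Qed.

Lemma frobD k (x y : F) : (x + y) ^+ (2 ^ k) = x ^+ (2 ^ k) + y ^+ (2 ^ k).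
Proof.
elim: k => [|k IH]; first by rewrite !expr1.
by rewrite expnSr !exprM IH sqrD.
Qed.

Lemma frob_sum k I (r : seq I) (P : pred I) (G : I -> F) :
  (\sum_(i <- r | P i) G i) ^+ (2 ^ k) = \sum_(i <- r | P i) G i ^+ (2 ^ k).
Proof.
apply: (big_morph (fun x => x ^+ (2 ^ k))); first exact: frobD.
by rewrite expr0n expn_eq0.
Qed.

Lemma pow2S k (x : F) : (x ^+ (2 ^ k)) ^+ 2 = x ^+ (2 ^ k.+1).
Proof. by rewrite -exprM expnSr. Qed.

Lemma pow2D k j (x : F) : (x ^+ (2 ^ k)) ^+ (2 ^ j) = x ^+ (2 ^ (k + j)).
Proof. by rewrite -exprM expnD. Qed.

Lemma add2 (x : F) : x + x = 0.
Proof. exact: addrr_pchar2. Qed.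

Lemma opp2 (x : F) : - x = x.
Proof. exact: oppr_pchar2. Qed.

Lemma sub2 (x y : F) : x - y = x + y.
Proof. by rewrite opp2. Qed.

Lemma eq2 (x y : F) : (x + y == 0) = (x == y).
Proof. by rewrite -sub2 subr_eq0. Qed.

Variables C D : F.
Local Notation s := (Sprev C D).

Lemma s0 : s 0 = 0. Proof. by []. Qed.
Lemma s1 : s 1 = 1. Proof. by []. Qed.
Lemma SseqE n : Sseq C D n = s n.+1.
Proof. by rewrite /Sprev /Sseq /=; case: (Spair C D n). Qed.
Lemma sS n : s n.+2 = C ^+ (2 ^ n) * s n.+1 + D ^+ (2 ^ n) * s n.
Proof. by rewrite /Sprev /Sseq /=; case: (Spair C D n). Qed.

Lemma R2 n : s n.+2 = C * s n.+1 ^+ 2 + D ^+ 2 * s n ^+ 4.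
Proof.
suff: s n.+2 = C * s n.+1 ^+ 2 + D ^+ 2 * s n ^+ 4 /\
      s n.+3 = C * s n.+2 ^+ 2 + D ^+ 2 * s n.+1 ^+ 4 by case.
elim: n => [|n [IH1 IH2]].
  by rewrite !sS s0 s1 /=; split; ring.
split=> //.
have -> : s n.+4 = C ^+ (2 ^ n.+2) * (C * s n.+2 ^+ 2 + D ^+ 2 * s n.+1 ^+ 4)
   + D ^+ (2 ^ n.+2) * (C * s n.+1 ^+ 2 + D ^+ 2 * s n ^+ 4) by rewrite sS -IH1 -IH2.
rewrite (sS n.+1) !(sS n).
have e4 : forall x y : F, (x + y) ^+ 4 = x ^+ 4 + y ^+ 4.
  by move=> x y; rewrite (_ : 4 = 2 ^ 2)%N // frobD.
have p4 : forall k (x : F), (x ^+ (2 ^ k)) ^+ 4 = x ^+ (2 ^ k.+2).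
  by move=> k x; rewrite (_ : 4 = 2 ^ 2)%N // pow2D addn2.
rewrite !(sqrD, e4, exprMn, pow2S, p4).
ring.
Qed.

Lemma powE (x : F) a b : a = b -> x ^+ a = x ^+ b. Proof. by move->. Qed.

Hypothesis hD : D != 0.

Lemma Dinv k : D ^- (2 ^ k - 1) = D / D ^+ (2 ^ k).
Proof.
have hk : (2 ^ k = (2 ^ k - 1) + 1)%N by rewrite subnK // expn_gt0.
rewrite [in RHS]hk exprD expr1 invfM mulrA mulrC mulrA mulVf ?mul1r //.
Qed.

Variable m : nat.
Definition cf i := Sprev C D (m - 1 - i) ^+ (2 ^ i.+1) + D ^- (2 ^ i.+1 - 1) * Sseq C D i.

Lemma cfE j : (j.+2 < m)%N ->
  cf j + cf j.+1 * C ^+ (2 ^ j.+1) + cf j.+2 * D ^+ (2 ^ j.+2) = 0.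
Proof.
move=> hj; rewrite /cf !SseqE.
set n := (m - 3 - j)%N.
have e0 : (m - 1 - j = n.+2)%N by rewrite /n; lia.
have e1 : (m - 1 - j.+1 = n.+1)%N by rewrite /n; lia.
have e2 : (m - 1 - j.+2 = n)%N by rewrite /n; lia.
rewrite e0 e1 e2 !Dinv (sS j.+1).
have u2 : D ^+ (2 ^ j.+2) = (D ^+ (2 ^ j.+1)) ^+ 2 by rewrite pow2S.
have u4 : D ^+ (2 ^ j.+3) = (D ^+ (2 ^ j.+1)) ^+ 4.
  by rewrite -exprM; apply: powE; rewrite !expnS; lia.
have ha : s n.+2 ^+ (2 ^ j.+1) = C ^+ (2 ^ j.+1) * s n.+1 ^+ (2 ^ j.+2)
    + (D ^+ (2 ^ j.+1)) ^+ 2 * s n ^+ (2 ^ j.+3).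
  have f1 : (s n.+1 ^+ 2) ^+ (2 ^ j.+1) = s n.+1 ^+ (2 ^ j.+2) by rewrite -exprM -expnS.
  have f2 : (s n ^+ 4) ^+ (2 ^ j.+1) = s n ^+ (2 ^ j.+3).
    by rewrite -exprM; apply: powE; rewrite !expnS; lia.
  have f3 : (D ^+ 2) ^+ (2 ^ j.+1) = (D ^+ (2 ^ j.+1)) ^+ 2 by rewrite -!exprM mulnC.
  by rewrite R2 frobD [(C * _) ^+ _]exprMn [(D ^+ 2 * _) ^+ _]exprMn f1 f2 f3.
rewrite ha u2 u4.
set u := D ^+ (2 ^ j.+1).
have hu : u != 0 by rewrite expf_neq0.
set a := s _ ^+ _; set a' := s _ ^+ _.
set C' := C ^+ _.
set X := D / u * s j.+1 + C' * (D / u ^+ 2) * s j.+2.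
have -> : C' * a + u ^+ 2 * a' + D / u * s j.+1 + (a + D / u ^+ 2 * s j.+2) * C' +
  (a' + D / u ^+ 4 * (C' * s j.+2 + u * s j.+1)) * u ^+ 2 = (C' * a + C' * a) + 
  (u ^+ 2 * a' + u ^+ 2 * a') + (X + X).
  rewrite /X; field; exact: hu.
by rewrite !add2.
Qed.

Hypothesis hm : (2 <= m)%N.
Hypothesis hDq : D ^+ (2 ^ m) = D.
Hypothesis hCq : C ^+ (2 ^ m) = C.

Lemma mE : exists k, m = k.+2.
Proof. by exists (m - 2)%N; lia. Qed.

Lemma cfE1 : cf 0 * C + cf 1 * D ^+ 2 + cf (m - 1) = 0.
Proof.
have [k mk] := mE.
rewrite /cf !SseqE !Dinv mk.
have -> : (k.+2 - 1 - 0 = k.+1)%N by lia.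
have -> : (k.+2 - 1 - 1 = k)%N by lia.
have -> : (k.+2 - 1 - (k.+2 - 1) = 0)%N by lia.
have -> : ((k.+2 - 1).+1 = k.+2)%N by lia.
rewrite -mk hDq s0 expr0n expn_eq0 /= add0r.
rewrite (sS 0) s0 s1 expr1 !expr1 mulr0 addr0 mulr1.
rewrite mk (R2 k) (_ : 2 ^ 1 = 2)%N // (_ : 2 ^ 2 = 4)%N //.
set a := s k.+1; set b := s k.
have -> : (a ^+ 2 + D / D ^+ 2 * 1) * C + (b ^+ 4 + D / D ^+ 4 * C) * D ^+ 2 +
  D / D * (C * a ^+ 2 + D ^+ 2 * b ^+ 4) =
  (C * a ^+ 2 + C * a ^+ 2) + (D ^+ 2 * b ^+ 4 + D ^+ 2 * b ^+ 4) + (C / D + C / D).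
  by field.
by rewrite !add2 ?addr0.
Qed.

Definition lam := cf 0 * D + cf (m - 2) + cf (m - 1) * C ^+ (2 ^ (m - 1)).

Lemma lamE : lam = Sprev C D m.+1 + D * Sprev C D (m - 1) ^+ 2.
Proof.
have [k mk] := mE.
rewrite /lam /cf !SseqE !Dinv mk.
have -> : (k.+2 - 1 - 0 = k.+1)%N by lia.
have -> : (k.+2 - 1 - (k.+2 - 2) = 1)%N by lia.
have -> : (k.+2 - 1 - (k.+2 - 1) = 0)%N by lia.
have -> : ((k.+2 - 1).+1 = k.+2)%N by lia.
have -> : ((k.+2 - 2).+1 = k.+1)%N by lia.
have -> : (k.+2 - 1 = k.+1)%N by lia.
rewrite -mk hDq s0 expr0n expn_eq0 /= add0r s1 expr1n.
rewrite mk (sS k.+1) (_ : 2 ^ 1 = 2)%N //.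
set h := D ^+ (2 ^ k.+1).
have hh : h ^+ 2 = D by rewrite /h pow2S -mk.
have h0 : h != 0 by rewrite expf_neq0.
set a := s k.+1; set b := s k.+2; set C' := C ^+ _.
have -> : (a ^+ 2 + D / D ^+ 2 * 1) * D + (1 + D / h * a) + D / D * b * C' =
   (1 + 1) + (C' * b + h * a + D * a ^+ 2).
  rewrite -hh; field; exact: h0.
by rewrite add2 add0r.
Qed.

Lemma lam2 : lam ^+ 2 = lam.
Proof.
have [k mk] := mE.
rewrite lamE sqrD exprMn -exprM.
have -> : (m - 1 = k.+1)%N by lia.
rewrite {2}mk (R2 k.+1) {1}mk (sS k.+1) sqrD !exprMn !pow2S -mk hCq hDq.
set a := s k.+1; set b := s k.+2.
have -> : (2 * 2 = 4)%N by [].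
by ring.
Qed.

Lemma telesc (c W : nat -> F) (n : nat) :
  (forall j, (j.+2 < n.+2)%N ->
     c j + c j.+1 * C ^+ (2 ^ j.+1) + c j.+2 * D ^+ (2 ^ j.+2) = 0) ->
  \sum_(i < n.+2) c i * (W i.+2 + C ^+ (2 ^ i) * W i.+1 + D ^+ (2 ^ i) * W i) =
  c 0%N * D ^+ (2 ^ 0) * W 0%N + (c 0%N * C ^+ (2 ^ 0) + c 1%N * D ^+ (2 ^ 1)) * W 1%N
  + c n * W n.+2 + c n.+1 * (W n.+3 + C ^+ (2 ^ n.+1) * W n.+2).
Proof.
elim: n => [|n IH] hE.
  rewrite !big_ord_recr big_ord0 /=; ring.
rewrite big_ord_recr /= IH; last by move=> j hj; apply: hE; lia.
have e := hE n (ltnSn _).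
apply/eqP; rewrite -subr_eq0; apply/eqP.
transitivity ((c n + c n.+1 * C ^+ (2 ^ n.+1) + c n.+2 * D ^+ (2 ^ n.+2)) * W n.+2).
  ring.
by rewrite e mul0r.
Qed.

Lemma LM (w : F) : w ^+ (2 ^ m) = w ->
  \sum_(i < m) cf i * (w ^+ 4 + C * w ^+ 2 + D * w) ^+ (2 ^ i) = lam * w.
Proof.
move=> hw.
have [k mk] := mE.
have e1 := cfE1.
rewrite /lam.
move: e1 hw; rewrite mk => e1 hw.
pose W j := w ^+ (2 ^ j).
have -> : \sum_(i < k.+2) cf i * (w ^+ 4 + C * w ^+ 2 + D * w) ^+ (2 ^ i) =
  \sum_(i < k.+2) cf i * (W i.+2 + C ^+ (2 ^ i) * W i.+1 + D ^+ (2 ^ i) * W i).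
  apply: eq_bigr => i _; congr (_ * _).
  rewrite !frobD [(C * _) ^+ _]exprMn [(D * _) ^+ _]exprMn /W -!exprM; congr (_ ^+ _ + _ * _ ^+ _ + _ * _); rewrite !expnS; lia.
rewrite telesc; last by move=> j hj; apply: cfE; rewrite mk.
have -> : W k.+2 = w by [].
have -> : W k.+3 = w ^+ 2 by rewrite /W expnS mulnC exprM hw.
have -> : W 0%N = w by rewrite /W expr1.
have -> : W 1%N = w ^+ 2 by [].
have -> : (k.+2 - 2 = k)%N by lia.
have -> : (k.+2 - 1 = k.+1)%N by lia.
rewrite (_ : 2 ^ 0 = 1)%N // (_ : 2 ^ 1 = 2)%N // !expr1.
have e1' : cf 0 * C + cf 1 * D ^+ 2 = cf k.+1.
  by apply/eqP; rewrite -eq2 e1.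
rewrite e1'; set z := cf k.+1 * w ^+ 2; transitivity ((cf 0 * D + cf k + cf k.+1 * C ^+ (2 ^ k.+1)) * w + (z + z)); first by rewrite /z; ring.
by rewrite add2 addr0.
Qed.

Definition tt n := if n is k.+1 then D * s k ^+ 2 else 1.
Definition X a0 a1 n := a0 * tt n + a1 * s n.

Lemma tS n : tt n.+2 = C ^+ (2 ^ n) * tt n.+1 + D ^+ (2 ^ n) * tt n.
Proof.
case: n => [|n] /=; first by rewrite s0 s1 expr1n expr0n /= !expr1; ring.
by rewrite sS sqrD !exprMn !pow2S; ring.
Qed.

Lemma XS a0 a1 n : X a0 a1 n.+2 = C ^+ (2 ^ n) * X a0 a1 n.+1 + D ^+ (2 ^ n) * X a0 a1 n.
Proof. by rewrite /X tS sS; ring. Qed.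

Lemma X0 a0 a1 : X a0 a1 0 = a0. Proof. by rewrite /X /= s0; ring. Qed.
Lemma X1 a0 a1 : X a0 a1 1 = a1. Proof. by rewrite /X /= s0 s1 expr0n /=; ring. Qed.

Lemma Qn n : (s n.+1 * tt n + s n * tt n.+1) * D = D ^+ (2 ^ n).
Proof.
elim: n => [|n IH]; first by rewrite /= s0 s1 expr1; ring.
rewrite sS tS.
set z := C ^+ (2 ^ n) * s n.+1 * tt n.+1.
transitivity ((z + z) * D + (s n.+1 * tt n + s n * tt n.+1) * D * D ^+ (2 ^ n)).
  by rewrite /z; ring.
by rewrite add2 mul0r add0r IH -pow2S expr2.
Qed.

Definition fixq (x : F) := x ^+ (2 ^ m) = x.
Lemma fixqD x y : fixq x -> fixq y -> fixq (x + y).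
Proof. by rewrite /fixq frobD => -> ->. Qed.
Lemma fixqM x y : fixq x -> fixq y -> fixq (x * y).
Proof. by rewrite /fixq exprMn => -> ->. Qed.
Lemma fixq0 : fixq 0. Proof. by rewrite /fixq expr0n expn_eq0. Qed.
Lemma fixq1 : fixq 1. Proof. by rewrite /fixq expr1n. Qed.
Lemma fixqX x n : fixq x -> fixq (x ^+ n).
Proof. by rewrite /fixq -exprM mulnC exprM => ->. Qed.

Lemma fixq_s n : fixq (s n).
Proof.
suff: fixq (s n) /\ fixq (s n.+1) by case.
elim: n => [|n [h1 h2]]; first by split; [apply: fixq0 | apply: fixq1].
split=> //; rewrite sS; apply: fixqD; apply: fixqM => //; apply: fixqX; [exact: hCq|exact: hDq].
Qed.

Lemma fixq_t n : fixq (tt n).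
Proof. case: n => [|n] /=; [exact: fixq1 | apply: fixqM; [exact: hDq | apply/fixqX/fixq_s]]. Qed.

Lemma fixq_X a0 a1 n : fixq a0 -> fixq a1 -> fixq (X a0 a1 n).
Proof. move=> h0 h1; apply: fixqD; apply: fixqM => //; [apply: fixq_t | apply: fixq_s]. Qed.

Lemma Cpow n : C ^+ (2 ^ (n + m)) = C ^+ (2 ^ n).
Proof. by rewrite expnD mulnC exprM hCq. Qed.
Lemma Dpow n : D ^+ (2 ^ (n + m)) = D ^+ (2 ^ n).
Proof. by rewrite expnD mulnC exprM hDq. Qed.

Section Per.
Variables a0 a1 : F.
Hypothesis ha0 : fixq a0.
Hypothesis ha1 : fixq a1.
Hypothesis hp0 : X a0 a1 m = a0.
Hypothesis hp1 : X a0 a1 m.+1 = a1.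
Local Notation Y := (X a0 a1).

Lemma Yper n : Y (n + m) = Y n.
Proof.
suff: Y (n + m) = Y n /\ Y (n.+1 + m) = Y n.+1 by case.
elim: n => [|n [h1 h2]]; first by rewrite add0n add1n hp0 hp1 X0 X1.
split=> //.
by rewrite addSn addSn XS -addSn h2 h1 Cpow Dpow XS.
Qed.

Definition wd r := \sum_(j < m) Y (m + r - j) ^+ (2 ^ j).

Lemma wsq r : wd r ^+ 2 = wd r.+1.
Proof.
have [k mk] := mE.
rewrite /wd (frob_sum 1) mk.
rewrite big_ord_recr [in RHS]big_ord_recl /=.
have -> : Y (k.+2 + r.+1 - 0) ^+ (2 ^ 0) = Y (k.+2 + r - k.+1) ^+ (2 ^ k.+1) ^+ (2 ^ 1).
  rewrite pow2D addn1 (_ : (2 ^ k.+2) = 2 ^ m)%N; last by rewrite mk.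
  have := fixq_X (k.+2 + r - k.+1) ha0 ha1; rewrite /fixq => ->.
  rewrite expr1 subn0 -[in RHS]Yper; congr (Y _); rewrite mk; lia.
rewrite addrC; congr (_ + _); apply: eq_bigr => i _.
rewrite pow2D addn1; congr (Y _ ^+ _); rewrite /bump /=; lia.
Qed.

Lemma wpow k : wd 0 ^+ (2 ^ k) = wd k.
Proof.
elim: k => [|k IH]; first by rewrite expr1.
by rewrite -pow2S IH wsq.
Qed.

Lemma wfix : fixq (wd 0).
Proof.
rewrite /fixq wpow /wd; apply: eq_bigr => j _.
rewrite ?addn0; congr (_ ^+ _); rewrite -[in RHS]Yper; congr (Y _).
have := ltn_ord j; lia.
Qed.

Lemma wM : wd 0 ^+ 4 + C * wd 0 ^+ 2 + D * wd 0 = 0.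
Proof.
have h4 : wd 0 ^+ 4 = wd 2 by exact: (wpow 2).
have h2 : wd 0 ^+ 2 = wd 1 by exact: (wsq 0).
rewrite h4 h2.
rewrite /wd !big_distrr -!big_split /=.
apply: big1 => j _.
have hj := ltn_ord j.
have -> : (m + 2 - j = (m - j).+2)%N by lia.
have -> : (m + 1 - j = (m - j).+1)%N by lia.
rewrite addn0 XS frobD [(C ^+ _ * _) ^+ _]exprMn [(D ^+ _ * _) ^+ _]exprMn !pow2D subnK; last exact: ltnW.
rewrite hCq hDq.
set u := C * _; set v := D * _.
have -> : u + v + u + v = (u + u) + (v + v) by ring.
by rewrite !add2 ?addr0.
Qed.
End Per.

Lemma Xscale c a0 a1 n : X (c * a0) (c * a1) n = c * X a0 a1 n.
Proof. by rewrite /X; ring. Qed.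

Lemma kvec : lam = 0 -> exists a0 a1, fixq a0 /\ fixq a1 /\ (a0 != 0 \/ a1 != 0) /\
   X a0 a1 m = a0 /\ X a0 a1 m.+1 = a1.
Proof.
have [k mk] := mE.
rewrite lamE => hl.
have hQ : s m.+1 * tt m + s m * tt m.+1 = 1.
  apply: (mulIf hD); rewrite Qn hDq mul1r //.
have htm : tt m = D * s (m - 1) ^+ 2 by rewrite mk /= subn1.
rewrite -htm in hl.
have hst : s m.+1 = tt m by apply/eqP; rewrite -eq2 hl.
have ft := fixq_t; have fs := fixq_s.
rewrite /X.
have c2 : forall x y Z : F, x - y = Z + Z -> x = y.
  by move=> x y Z; rewrite add2 => /eqP; rewrite subr_eq0 => /eqP.
case: (boolP ((s m != 0) || (tt m + 1 != 0))) => [h1|].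
  exists (s m), (tt m + 1); split; first exact: fs.
  split; first by apply: fixqD => //; apply: fixq1.
  split; first by case/orP: h1; [left|right].
  split; first by apply: (c2 _ _ (s m * tt m)); ring.
  transitivity ((s m.+1 * tt m + s m * tt m.+1) + s m.+1); first ring.
  by rewrite hQ hst addrC.
rewrite negb_or !negbK => /andP [/eqP hs0 /eqP ht1'].
have ht1 : tt m = 1 by apply/eqP; rewrite -eq2 ht1'.
case: (boolP ((s m.+1 + 1 != 0) || (tt m.+1 != 0))) => [h2|].
  exists (s m.+1 + 1), (tt m.+1); split; first by apply: fixqD => //; apply: fixq1.
  split; first exact: ft.
  split; first by case/orP: h2; [left|right].
  split; first by rewrite hs0 ht1; ring.
  by apply: (c2 _ _ (s m.+1 * tt m.+1)); ring.
rewrite negb_or !negbK => /andP [/eqP hs1 /eqP ht2].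
exists 1, 0; split; first exact: fixq1.
split; first exact: fixq0.
split; first by left; exact: oner_neq0.
by rewrite ht1 ht2; split; ring.
Qed.

Hypothesis hFq : forall x : F, fixq (x ^+ (2 ^ m) + x).
Hypothesis hroot : forall p : {poly F}, p != 0 -> (size p <= 2 ^ (2 * m))%N ->
  exists x, ~~ root p x.

Lemma kernel : lam = 0 -> exists w, fixq w /\ w != 0 /\ w ^+ 4 + C * w ^+ 2 + D * w = 0.
Proof.
case/kvec => a0 [a1 [h0 [h1 [hnz [hp0 hp1]]]]].
pose al j := X a0 a1 (m - j) ^+ (2 ^ j).
pose p := \sum_(j < m) al j *: ('X^(2 ^ j) + 'X^(2 ^ (m + j))) : {poly F}.
have pE : forall x, p.[x] = wd ((x ^+ (2 ^ m) + x) * a0) ((x ^+ (2 ^ m) + x) * a1) 0.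
  move=> x; rewrite /p /wd horner_sum; apply: eq_bigr => j _.
  rewrite hornerZ hornerD !hornerXn addn0 Xscale exprMn frobD pow2D /al.
  by rewrite mulrC addrC.
have pnz : p != 0.
  have [j0 hj0] : exists j0 : 'I_m, al j0 != 0.
    case: hnz => hnz.
      have m0 : (0 < m)%N by lia.
      exists (Ordinal m0); rewrite /al /= subn0 hp0 expr1 //.
    have m0 : (m - 1 < m)%N by lia.
    exists (Ordinal m0); rewrite /al /=.
    have -> : (m - (m - 1) = 1)%N by lia.
    by rewrite X1 expf_neq0.
  apply: contraNneq hj0 => p0.
  have := congr1 (fun p : {poly F} => p`_(2 ^ j0)) p0.
  rewrite coef0 /p coef_sum (bigD1 j0) //= big1 ?addr0.
    rewrite coefZ coefD !coefXn eqxx eqn_exp2l //.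
    have -> : (nat_of_ord j0 == m + j0)%N = false by apply/negbTE; have := ltn_ord j0; lia.
    by rewrite addr0 mulr1 => ->.
  move=> j hj; rewrite coefZ coefD !coefXn !eqn_exp2l //.
  have -> : (nat_of_ord j0 == m + j)%N = false by apply/negbTE; have := ltn_ord j0; lia.
  have -> : (nat_of_ord j0 == nat_of_ord j)%N = false by apply/negbTE; rewrite eq_sym.
  by rewrite addr0 mulr0.
have psz : (size p <= 2 ^ (2 * m))%N.
  apply: (leq_trans (size_sum _ _ _)); apply/bigmax_leqP => j _.
  apply: (leq_trans (size_scale_leq _ _)); apply: (leq_trans (size_polyD _ _)).
  rewrite !size_polyXn geq_max !ltn_exp2l //; have := ltn_ord j; lia.
have [x hx] := hroot pnz psz.
set c := x ^+ (2 ^ m) + x.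
have hp0' : X (c * a0) (c * a1) m = c * a0 by rewrite Xscale hp0.
have hp1' : X (c * a0) (c * a1) m.+1 = c * a1 by rewrite Xscale hp1.
have hc0 : fixq (c * a0) by apply: fixqM => //; apply: hFq.
have hc1 : fixq (c * a1) by apply: fixqM => //; apply: hFq.
exists (wd (c * a0) (c * a1) 0); split; first exact: wfix.
split; last exact: wM.
by rewrite -pE.
Qed.
End Char2.
Unset Implicit Arguments.

Theorem theorem3p10 (L : finFieldType) (m : nat)
  (hchar : (2%N \in [pchar L])) (hm : (2 <= m)%N)
  (hcard : #|L| = ((2 ^ m) ^ 2)%N)
  (b delta : L)
  (hb : b != 0) (hbq : b ^+ (2 ^ m) = b)
  (hdelta : delta ^+ (2 ^ m) != delta) :
  let q := (2 ^ m)%N in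
  let e := (1 + (q ^ 2 + q) %/ 4)%N in
  let B := b ^+ 4 * (delta ^+ q + delta) ^+ 4 * delta ^+ (q + 1) in
  let C := b ^+ 4 * (delta ^+ q + delta) ^+ 4 in
  let D := b ^+ 4 * (delta ^+ q + delta) ^+ 5 in
  let P := fun x : L => b * (x ^+ q + x + delta) ^+ e + x in
  let Pinv := fun x : L =>
    x + b * (delta + \sum_(i < m)
               ((Sprev C D (m - 1 - i)) ^+ (2 ^ i.+1)
                 + D ^- (2 ^ i.+1 - 1) * Sseq C D i)
               * ((x ^+ q + x) ^+ 4 + B) ^+ (2 ^ i)) ^+ e in
  bijective P ->
  (forall c : L, P (Pinv c) = c) /\ (forall c : L, Pinv (P c) = c).
Proof.
move=> q e B C D P Pinv Pbij.
have [k mk] : exists k, m = k.+2 by exists (m - 2)%N; lia.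
have hfin : forall x : L, (x ^+ q) ^+ q = x.
  by move=> x; rewrite -exprM mulnn -hcard expf_card.
have c2 : forall x y Z : L, x - y = Z + Z -> x = y.
  by move=> x y Z; rewrite (add2 hchar) => /eqP; rewrite subr_eq0 => /eqP.
set t := delta ^+ q + delta.
have ht : t ^+ q = t by rewrite /t frobD // hfin addrC.
have ht0 : t != 0 by rewrite /t eq2.
have hCE : C = b ^+ 4 * t ^+ 4 by [].
have hDE : D = C * t by rewrite /D /C /t; ring.
have hBE : B = C * (delta ^+ q * delta).
  by rewrite /B /C /t addn1 (exprSr delta q) mulrA.
have hCq : C ^+ (2 ^ m) = C by rewrite hCE exprMn -!exprM !(mulnC 4%N) !exprM hbq ht.
have hDq : D ^+ (2 ^ m) = D by rewrite hDE exprMn hCq ht.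
have hD : D != 0 by rewrite hDE hCE !mulf_neq0 // expf_neq0.
have hFq : forall x : L, fixq m (x ^+ (2 ^ m) + x).
  by move=> x; rewrite /fixq frobD // hfin addrC.
have hroot : forall p : {poly L}, p != 0 -> (size p <= 2 ^ (2 * m))%N ->
    exists x, ~~ root p x.
  move=> p p0 hs; apply/existsP; rewrite -negb_forall; apply/negP => /forallP hall.
  have := max_poly_roots p0 _ (enum_uniq L).
  rewrite -cardE hcard -expnM mulnC => /(_ _) H.
  suff : (2 ^ (2 * m) < size p)%N by rewrite ltnNge hs.
  by apply: H; apply/allP => x _; apply: hall.
have zl : forall z : L, let n := z ^+ ((q ^ 2 + q) %/ 4) in
    [/\ n ^+ q = n, n ^+ 4 = z ^+ q * z & z ^+ e = z * n].
  move=> z n.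
  have hq4 : ((q ^ 2 + q) %/ 4 = (q + 1) * 2 ^ k)%N.
    have -> : (q ^ 2 + q = 4 * ((q + 1) * 2 ^ k))%N.
      rewrite /q mk !expnS; set x := (2 ^ k)%N; nia.
    by rewrite mulKn.
  set N := z ^+ q * z.
  have hN : N ^+ q = N by rewrite /N exprMn hfin mulrC.
  have hn : n = N ^+ (2 ^ k) by rewrite /n hq4 exprM addn1 exprSr.
  split.
  - by rewrite hn -exprM mulnC exprM hN.
  - rewrite hn -exprM (_ : (2 ^ k * 4 = q)%N) ?hN //.
    by rewrite /q mk !expnS; set x := (2 ^ k)%N; nia.
  - by rewrite /e exprD expr1.
have e4 : forall x y : L, (x + y) ^+ 4 = x ^+ 4 + y ^+ 4.
  by move=> x y; rewrite (_ : 4 = 2 ^ 2)%N // frobD.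
have core : forall (y w : L), fixq m w ->
    let z := w + delta in
    let n := z ^+ ((q ^ 2 + q) %/ 4) in
    let x := y + b * z ^+ e in
    x ^+ q + x = y ^+ q + y + b * n * t /\
    (b * n * t) ^+ 4 = C * (w ^+ 2 + t * w) + B.
  move=> y w hw z n x.
  have [hnq hn4 hze] := zl z.
  have hzq : z ^+ q = w + delta ^+ q by rewrite /z frobD // hw.
  split.
    rewrite /x frobD // exprMn hbq hze exprMn hnq hzq.
    rewrite -/n -/q; refine (c2 _ _ (b * n * w) _); rewrite /z /t; ring.
  rewrite !exprMn hn4 hzq hBE hCE /z.
  by rewrite /t; ring.
have fwd : forall x, fixq m (x ^+ q + x) /\
    (P x ^+ q + P x) ^+ 4 + B = (x ^+ q + x) ^+ 4 + C * (x ^+ q + x) ^+ 2 + D * (x ^+ q + x).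
  move=> x; set w := x ^+ q + x.
  have hw : fixq m w by rewrite /fixq /w frobD // hfin addrC.
  have [h1 h2] := core x w hw.
  have hPx : P x = x + b * (w + delta) ^+ e by rewrite /P /w addrC.
  split => //.
  rewrite hPx h1 -/w e4 h2 hDE.
  by refine (c2 _ _ B _); ring.
have bwd : forall y w, fixq m w -> w ^+ 4 + C * w ^+ 2 + D * w = (y ^+ q + y) ^+ 4 + B ->
    (y + b * (w + delta) ^+ e) ^+ q + (y + b * (w + delta) ^+ e) = w /\
    P (y + b * (w + delta) ^+ e) = y.
  move=> y w hw hM.
  have [h1 h2] := core y w hw.
  have hx : (y + b * (w + delta) ^+ e) ^+ q + (y + b * (w + delta) ^+ e) = w.
    apply/eqP; rewrite -subr_eq0.
    suff : ((y + b * (w + delta) ^+ e) ^+ q + (y + b * (w + delta) ^+ e) - w) ^+ 4 == 0.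
      by rewrite expf_eq0.
    rewrite sub2 // e4 h1 e4 h2.
    have hA : (y ^+ q + y) ^+ 4 = w ^+ 4 + C * w ^+ 2 + D * w + B.
      by rewrite hM; refine (c2 _ _ (- B) _); ring.
    rewrite hA hDE; apply/eqP.
    by refine (c2 _ _ (C * w ^+ 2 + C * t * w + B + w ^+ 4) _); ring.
  split => //.
  rewrite /P hx.
  by refine (c2 _ _ (b * (w + delta) ^+ e) _); ring.
have z0 : (0 : L) ^+ q + 0 = 0 by rewrite expr0n expn_eq0 /= addr0.
have hlam : lam C D m = 1.
  have h2 := lam2 hchar hD hm hDq hCq.
  have : lam C D m * (lam C D m - 1) = 0 by rewrite mulrBr -expr2 h2 mulr1 subrr.
  move/eqP; rewrite mulf_eq0 => /orP [/eqP l0 | ]; last by rewrite subr_eq0 => /eqP.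
  exfalso.
  have [w0 [hw0 [wnz hM0]]] := kernel hchar hD hm hDq hCq hFq hroot l0.
  have [_ hA0] := fwd 0.
  have hM' : w0 ^+ 4 + C * w0 ^+ 2 + D * w0 = (P 0 ^+ q + P 0) ^+ 4 + B.
    by rewrite hA0 hM0 z0; ring.
  have [hx hPx] := bwd (P 0) w0 hw0 hM'.
  have x0 : P 0 + b * (w0 + delta) ^+ e = 0 by apply: (bij_inj Pbij); rewrite hPx.
  by move: wnz; rewrite -hx x0 z0 eqxx.
have hleft : forall c, Pinv (P c) = c.
  move=> x; have [hw hA] := fwd x.
  have hL := LM hchar C hD hm hDq hw.
  rewrite hlam mul1r in hL.
  rewrite /Pinv hA hL (addrC delta) /P.
  by refine (c2 _ _ (b * (x ^+ q + x + delta) ^+ e) _); ring.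
split => //.
case: Pbij => g h1 h2 c.
by rewrite -{1}(h2 c) hleft h2.
Qed.
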